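(* Let $n=3$ and $k\ge 2$. Let $A$ be a connectivity class of external positions which is not the frame class, and let $\pi$ be an even permutation of $A$. Then there exists a combination $g$ such that $g(p)=\pi(p)$ for all $p\in A$ and $g(q,l)=(q,l)$ for every external position $q\notin A$ and every $l\in B(q)$.
   Context: Here $n=3$, $k\ge2$, $M=\{0,\dots,k-1\}$. Positions are $p\in M^3$; $B(p)=\{i:p_i\in\{0,k-1\}\}$, $p$ external if $B(p)\ne\emptyset$ (internal positions are disregarded). For distinct $i,j$, $\psi_{i,j}:M^3\to M^3$ is $(\psi_{i,j}p)_i=k-1-p_j$, $(\psi_{i,j}p)_j=p_i$, the remaining coordinate unchanged; $\tau_{ij}$ is the transposition of $i,j$. A move is given by distinct $i,j$ and a constant $c\in M$ for the remaining coordinate: it applies $\psi_{i,j}$ to all positions whose remaining coordinate equals $c$ and fixes the others; it acts on $X=\{(p,l): p \text{ external}, l\in B(p)\}$ (orientation faces of cubies) by $(p,l)\mapsto(\psi_{i,j}(p),\tau_{ij}(l))$ for $p$ in its layer, fixing other pairs. A combination is a finite sequence of moves acting by composition. Connectivity classes are orbits of external positions under combinations. For odd $k$ the frame class is the set of positions with exactly one coordinate in $\{0,k-1\}$ and the others equal to $(k-1)/2$; for even $k$ there is none. *)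

(* Defs.v *)
From mathcomp Require Import all_boot all_fingroup.
Set Implicit Arguments. Unset Strict Implicit. Unset Printing Implicit Defensive.

(* Positions of the n = 3 cube: p in M^3 with M = {0,...,k-1} = 'I_k. *)
Definition pos (k : nat) := {ffun 'I_3 -> 'I_k}.

Definition B k (p : pos k) : {set 'I_3} :=
  [set i | (val (p i) == 0) || (val (p i) == k.-1)].

Definition external k (p : pos k) : bool := B p != set0.

(* psi_{i,j}: (psi p)_i = k-1-p_j, (psi p)_j = p_i, remaining coord unchanged.
   rev_ord x has value k - x.+1 = k-1-x. *)
Definition psi k (i j : 'I_3) (p : pos k) : pos k :=
  [ffun l => if l == i then rev_ord (p j) else if l == j then p i else p l].

Definition third (i j : 'I_3) : 'I_3 := inord (3 - i - j).

Definition move k := ('I_3 * 'I_3 * 'I_k)%type.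

Definition valid_move k (m : move k) : bool := m.1.1 != m.1.2.

Definition in_layer k (m : move k) (p : pos k) : bool :=
  p (third m.1.1 m.1.2) == m.2.

Definition move_pos k (m : move k) (p : pos k) : pos k :=
  if in_layer m p then psi m.1.1 m.1.2 p else p.

(* action on orientation pairs (p, l) *)
Definition move_X k (m : move k) (x : pos k * 'I_3) : pos k * 'I_3 :=
  if in_layer m x.1 then (psi m.1.1 m.1.2 x.1, tperm m.1.1 m.1.2 x.2) else x.

Definition combination k (g : seq (move k)) : bool := all (@valid_move k) g.

Definition act_pos k (g : seq (move k)) (p : pos k) : pos k :=
  foldl (fun q m => move_pos m q) p g.

Definition act_X k (g : seq (move k)) (x : pos k * 'I_3) : pos k * 'I_3 :=
  foldl (fun y m => move_X m y) x g.

Definition conn_class k (A : {set pos k}) : Prop :=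
  exists p0 : pos k, external p0 /\
    forall q, q \in A <-> exists g, combination g /\ act_pos g p0 = q.

Definition frame k : {set pos k} :=
  [set p | (#|B p| == 1) && [forall i, (i \notin B p) ==> (val (p i) == k.-1./2)]].

(* Main.v *)
Require Import Defs.
From mathcomp Require Import all_boot all_fingroup zify.
Set Implicit Arguments. Unset Strict Implicit. Unset Printing Implicit Defensive.

Section Part2.

Lemma third_ni (i j : 'I_3) : i != j -> third i j != i.
Proof.
case: i => [[|[|[|i]]] Hi] //; case: j => [[|[|[|j]]] Hj] //;
  rewrite /third -!val_eqE /= ?inordK //=; rewrite ?inordK //.
Qed.

Lemma third_nj (i j : 'I_3) : i != j -> third i j != j.
Proof.
case: i => [[|[|[|i]]] Hi] //; case: j => [[|[|[|j]]] Hj] //;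
  rewrite /third -!val_eqE /= ?inordK //=; rewrite ?inordK //.
Qed.

Lemma thirdC (i j : 'I_3) : i != j -> third j i == third i j.
Proof.
case: i => [[|[|[|i]]] Hi] //; case: j => [[|[|[|j]]] Hj] //;
  rewrite /third -!val_eqE /= ?inordK //=; rewrite ?inordK //.
Qed.

Lemma third_ji (i j : 'I_3) : i != j -> third j (third i j) == i.
Proof.
case: i => [[|[|[|i]]] Hi] //; case: j => [[|[|[|j]]] Hj] //;
  rewrite /third -!val_eqE /= ?inordK //=; rewrite ?inordK //.
Qed.

Lemma third_tj (i j : 'I_3) : i != j -> third (third i j) j == i.
Proof.
case: i => [[|[|[|i]]] Hi] //; case: j => [[|[|[|j]]] Hj] //;
  rewrite /third -!val_eqE /= ?inordK //=; rewrite ?inordK //.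
Qed.

Lemma third_it (i j : 'I_3) : i != j -> third i (third i j) == j.
Proof.
case: i => [[|[|[|i]]] Hi] //; case: j => [[|[|[|j]]] Hj] //;
  rewrite /third -!val_eqE /= ?inordK //=; rewrite ?inordK //.
Qed.

Lemma third_ti (i j : 'I_3) : i != j -> third (third i j) i == j.
Proof.
case: i => [[|[|[|i]]] Hi] //; case: j => [[|[|[|j]]] Hj] //;
  rewrite /third -!val_eqE /= ?inordK //=; rewrite ?inordK //.
Qed.

Lemma cover3 (i j x : 'I_3) : i != j -> [|| x == i, x == j | x == third i j].
Proof.
case: i => [[|[|[|i]]] Hi] //; case: j => [[|[|[|j]]] Hj] //;
  case: x => [[|[|[|x]]] Hx] //;  rewrite /third -!val_eqE /= ?inordK //.
Qed.

Definition inv_move k (m : move k) : move k := (m.1.2, m.1.1, m.2).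
Definition invseq k (g : seq (move k)) := rev (map (@inv_move k) g).

Lemma psi_i k (i j : 'I_3) (p : pos k) : (psi i j p) i = rev_ord (p j).
Proof. by rewrite ffunE eqxx. Qed.
Lemma psi_j k (i j : 'I_3) (p : pos k) : i != j -> (psi i j p) j = p i.
Proof. by move=> ij; rewrite ffunE eq_sym (negbTE ij) eqxx. Qed.
Lemma psi_o k (i j x : 'I_3) (p : pos k) : x != i -> x != j -> (psi i j p) x = p x.
Proof. by move=> xi xj; rewrite ffunE (negbTE xi) (negbTE xj). Qed.
Lemma psi_t k (i j : 'I_3) (p : pos k) : i != j -> (psi i j p) (third i j) = p (third i j).
Proof. by move=> ij; rewrite psi_o // ?third_ni ?third_nj. Qed.
Lemma rev_ordK' k (x : 'I_k) : rev_ord (rev_ord x) = x.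
Proof. exact: rev_ordK. Qed.
Lemma psiK k (i j : 'I_3) (p : pos k) : i != j -> psi j i (psi i j p) = p.
Proof.
move=> ij; apply/ffunP => x.
have ji : j != i by rewrite eq_sym.
case/or3P: (cover3 x ij) => /eqP ->.
- by rewrite psi_j // psi_j.
- by rewrite !psi_i rev_ordK.
- by rewrite !psi_o // ?third_ni ?third_nj // (eqP (thirdC ij)) ?third_ni ?third_nj.
Qed.

Lemma valid_inv k (m : move k) : valid_move (inv_move m) = valid_move m.
Proof. by rewrite /valid_move /= eq_sym. Qed.

Lemma move_XK k (m : move k) y : valid_move m -> move_X (inv_move m) (move_X m y) = y.
Proof.
case: m => [[i j] c]; case: y => p l; rewrite /valid_move /= => ij.
have t3 := eqP (thirdC ij).
rewrite /move_X /in_layer /=; case: (boolP (p (third i j) == c)) => H /=.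
  by rewrite t3 psi_t // H /= psiK // tpermC tpermK.
by rewrite t3 (negbTE H).
Qed.

Lemma inv_moveK k (m : move k) : inv_move (inv_move m) = m.
Proof. by case: m => [[i j] c]. Qed.

Lemma move_XKV k (m : move k) y : valid_move m -> move_X m (move_X (inv_move m) y) = y.
Proof. by move=> v; rewrite -{1}(inv_moveK m) move_XK // valid_inv. Qed.

Lemma move_X_fst k (m : move k) y : (move_X m y).1 = move_pos m y.1.
Proof. by rewrite /move_X /move_pos; case: ifP. Qed.

Lemma act_X_fst k (g : seq (move k)) y : (act_X g y).1 = act_pos g y.1.
Proof. by elim: g y => //= m g IH y; rewrite IH move_X_fst. Qed.

Lemma act_pos_X k (g : seq (move k)) p : act_pos g p = (act_X g (p, ord0)).1.
Proof. by rewrite act_X_fst. Qed.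

Lemma act_X_cat k (g1 g2 : seq (move k)) y : act_X (g1 ++ g2) y = act_X g2 (act_X g1 y).
Proof. by rewrite /act_X foldl_cat. Qed.
Lemma act_pos_cat k (g1 g2 : seq (move k)) p : act_pos (g1 ++ g2) p = act_pos g2 (act_pos g1 p).
Proof. by rewrite /act_pos foldl_cat. Qed.
Lemma act_X_cons k m (g : seq (move k)) y : act_X (m :: g) y = act_X g (move_X m y).
Proof. by []. Qed.
Lemma act_pos_cons k m (g : seq (move k)) p : act_pos (m :: g) p = act_pos g (move_pos m p).
Proof. by []. Qed.

Lemma comb_inv k (g : seq (move k)) : combination g -> combination (invseq g).
Proof.
by rewrite /combination /invseq all_rev all_map => H; apply/allP => m /(allP H) /=; rewrite valid_inv.
Qed.

Lemma invseqK k (g : seq (move k)) y : combination g -> act_X (invseq g) (act_X g y) = y.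
Proof.
elim: g y => //= m g IH y /andP[vm cg].
by rewrite /invseq /= rev_cons -cats1 act_X_cat IH //= move_XK.
Qed.

Lemma invseqK_pos k (g : seq (move k)) p : combination g -> act_pos (invseq g) (act_pos g p) = p.
Proof. by move=> cg; have /(f_equal fst) := invseqK (p, ord0) cg; rewrite !act_X_fst. Qed.

Lemma comb_cat k (g1 g2 : seq (move k)) : combination g1 -> combination g2 -> combination (g1 ++ g2).
Proof. by rewrite /combination all_cat => -> ->. Qed.

End Part2.

Section Part3.

Section Comm.
Variables (T : Type) (g gi h hi : T -> T) (Sg Sh : pred T).
Hypotheses (gout : forall y, ~~ Sg y -> g y = y) (gin : forall y, Sg y -> Sg (g y))
  (gK : forall y, gi (g y) = y)
  (hout : forall y, ~~ Sh y -> h y = y) (hin : forall y, Sh y -> Sh (h y))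
  (hK : forall y, hi (h y) = y).

Lemma giout y : ~~ Sg y -> gi y = y.
Proof. by move=> H; rewrite -{1}(gout H) gK. Qed.
Lemma hiout y : ~~ Sh y -> hi y = y.
Proof. by move=> H; rewrite -{1}(hout H) hK. Qed.

Lemma comm_fix (Z : pred T) : (forall y, Sg y -> Sh y -> Z y) ->
  forall y, ~~ Z y -> ~~ Z (g y) -> ~~ Z (h y) -> hi (gi (h (g y))) = y.
Proof.
move=> HZ y zy zgy zhy.
case: (boolP (Sg y)) => sgy.
  have sh : ~~ Sh (g y) by apply: contra zgy => /(HZ _ (gin sgy)).
  rewrite hout // gK hiout //; by apply: contra zy => /(HZ _ sgy).
rewrite gout //; case: (boolP (Sh y)) => shy.
  have sg : ~~ Sg (h y) by apply: contra zhy => /HZ; apply; exact: hin.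
  by rewrite giout // hK.
by rewrite hout // giout // hiout.
Qed.
End Comm.

Section Comm2.
Variables (T : eqType) (g gi h hi : T -> T) (Sg Sh : pred T) (P : T).
Hypotheses (gout : forall y, ~~ Sg y -> g y = y) (gin : forall y, Sg y -> Sg (g y))
  (gK : forall y, gi (g y) = y) (gKV : forall y, g (gi y) = y)
  (hout : forall y, ~~ Sh y -> h y = y) (hin : forall y, Sh y -> Sh (h y))
  (hK : forall y, hi (h y) = y) (hKV : forall y, h (hi y) = y)
  (HZ : forall y, Sg y -> Sh y -> y = P) (sgP : Sg P) (shP : Sh P)
  (gP : g P != P) (hP : h P != P).

Lemma comm_vals :
  [/\ hi (gi (h (g P))) = hi P, hi (gi (h (g (hi P)))) = gi P,
      hi (gi (h (g (gi P)))) = P &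
   [/\ gi P != hi P, gi P != P & hi P != P]].
Proof.
have giin y : Sg y -> Sg (gi y).
  move=> sy; apply/negPn/negP => ns; have e := gout ns; rewrite gKV in e.
  by move: ns; rewrite -e sy.
have hiin y : Sh y -> Sh (hi y).
  move=> sy; apply/negPn/negP => ns; have e := hout ns; rewrite hKV in e.
  by move: ns; rewrite -e sy.
have giP : gi P != P by apply: contra gP => /eqP e; rewrite -{1}e gKV.
have hiP : hi P != P by apply: contra hP => /eqP e; rewrite -{1}e hKV.
have sgg : ~~ Sh (g P).
  by apply/negP => sh; move: gP; rewrite (HZ (gin sgP) sh) eqxx.
have shh : ~~ Sg (h P).
  by apply/negP => sg; move: hP; rewrite (HZ sg (hin shP)) eqxx.
have nsh_gi : ~~ Sh (gi P).
  by apply/negP => sh; move: giP; rewrite (HZ (giin _ sgP) sh) eqxx.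
have nsg_hi : ~~ Sg (hi P).
  by apply/negP => sg; move: hiP; rewrite (HZ sg (hiin _ shP)) eqxx.
split.
- by rewrite (hout sgg) gK.
- by rewrite (gout nsg_hi) hKV (hiout hout hK nsh_gi).
- by rewrite gKV (giout gout gK shh) hK.
split=> //; apply/negP => /eqP e.
by move: nsh_gi; rewrite e hiin.
Qed.
End Comm2.

End Part3.

Section Part4.
Local Open Scope group_scope.

Lemma in_layer_move k (m : move k) p : valid_move m -> in_layer m (move_pos m p) = in_layer m p.
Proof.
case: m => [[i j] c]; rewrite /valid_move /in_layer /move_pos /in_layer /= => ij.
by case: ifP => //= H; rewrite psi_t // H.
Qed.

Lemma in_layer_inv k (m : move k) p : valid_move m -> in_layer (inv_move m) p = in_layer m p.
Proof.
by case: m => [[i j] c]; rewrite /valid_move /in_layer /= => ij; rewrite (eqP (thirdC ij)).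
Qed.

Lemma move_pos_out k (m : move k) p : ~~ in_layer m p -> move_pos m p = p.
Proof. by rewrite /move_pos => /negbTE ->. Qed.
Lemma move_X_out k (m : move k) y : ~~ in_layer m y.1 -> move_X m y = y.
Proof. by rewrite /move_X => /negbTE ->. Qed.

Lemma move_posK k (m : move k) p : valid_move m -> move_pos (inv_move m) (move_pos m p) = p.
Proof.
by move=> v; have /(f_equal fst) := move_XK (p, ord0) v; rewrite !move_X_fst.
Qed.
Lemma move_posKV k (m : move k) p : valid_move m -> move_pos m (move_pos (inv_move m) p) = p.
Proof.
by move=> v; have /(f_equal fst) := move_XKV (p, ord0) v; rewrite !move_X_fst.
Qed.

Definition realizes k (A : {set pos k}) (s : {perm pos k}) (g : seq (move k)) : Prop :=
  [/\ combination g, (forall p, p \in A -> act_pos g p = s p) &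
      (forall y, y.1 \notin A -> act_X g y = y)].
Definition Hr k (A : {set pos k}) (s : {perm pos k}) : Prop :=
  perm_on A s /\ exists g, realizes A s g.

Lemma Hr1 k (A : {set pos k}) : Hr A 1.
Proof. by split; [exact: perm_on1 | exists [::]; split => // p _; rewrite perm1]. Qed.

Lemma HrM k (A : {set pos k}) s t : Hr A s -> Hr A t -> Hr A (s * t).
Proof.
move=> [ps [g1 [c1 e1 f1]]] [pt [g2 [c2 e2 f2]]]; split; first exact: perm_onM.
exists (g1 ++ g2); split; first exact: comb_cat.
  by move=> p pA; rewrite act_pos_cat e1 // e2 ?permM // perm_closed.
by move=> y yA; rewrite act_X_cat f1 // f2.
Qed.

Lemma HrV k (A : {set pos k}) s : Hr A s -> Hr A s^-1.
Proof.
move=> [ps [g [c e f]]]; split; first exact: perm_onV.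
exists (invseq g); split; first exact: comb_inv.
  move=> p pA; have qA : s^-1 p \in A by rewrite perm_closed // perm_onV.
  by rewrite -{1}(permKV s p) -e // invseqK_pos.
by move=> y yA; rewrite -{1}(f _ yA) invseqK.
Qed.

Lemma HrJ k (A : {set pos k}) s t : Hr A s -> Hr A t -> Hr A (s ^ t).
Proof. by move=> hs ht; rewrite conjgE; exact: (HrM (HrV ht) (HrM hs ht)). Qed.

Definition cyc (T : finType) (a b c : T) : {perm T} := (tperm a b * tperm a c)%g.

Section Cyc.
Variables (T : finType) (a b c : T).
Hypotheses (ab : a != b) (ac : a != c) (bc : b != c).

Lemma cyc_a : cyc a b c a = b.
Proof. by rewrite permM tpermL (tpermD ab) // eq_sym. Qed.
Lemma cyc_b : cyc a b c b = c.
Proof. by rewrite permM (tpermR a b) tpermL. Qed.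
Lemma cyc_c : cyc a b c c = a.
Proof. by rewrite permM (tpermD ac bc) tpermR. Qed.
Lemma cyc_o x : x != a -> x != b -> x != c -> cyc a b c x = x.
Proof. by move=> xa xb xc; rewrite permM (tpermD (x:=a) (y:=b)) 1?eq_sym // (tpermD (x:=a) (y:=c)) 1?eq_sym. Qed.

Lemma cyc_char (f : {perm T}) : f a = b -> f b = c -> f c = a ->
  (forall x, x != a -> x != b -> x != c -> f x = x) -> f = cyc a b c.
Proof.
move=> fa fb fc fo; apply/permP => x.
case: (eqVneq x a) => [->|xa]; first by rewrite fa cyc_a.
case: (eqVneq x b) => [->|xb]; first by rewrite fb cyc_b.
case: (eqVneq x c) => [->|xc]; first by rewrite fc cyc_c.
by rewrite fo // cyc_o.
Qed.

Lemma cyc_conj (s : {perm T}) : (cyc a b c) ^ s = cyc (s a) (s b) (s c).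
Proof. by rewrite /cyc conjMg !tpermJ. Qed.

Lemma odd_cyc : odd_perm (cyc a b c) = false.
Proof. by rewrite odd_permM !odd_tperm ab ac. Qed.

Lemma perm_on_cyc (S : {set T}) : a \in S -> b \in S -> c \in S -> perm_on S (cyc a b c).
Proof.
move=> aS bS cS; apply/subsetP => x; rewrite inE => nx.
case: (eqVneq x a) => [->//|xa]; case: (eqVneq x b) => [->//|xb];
case: (eqVneq x c) => [->//|xc].
by rewrite cyc_o ?eqxx in nx.
Qed.
End Cyc.

Lemma cyc_rot (T : finType) (a b c : T) : a != b -> a != c -> b != c -> cyc b c a = cyc a b c.
Proof. move=> ab ac bc.
apply: (cyc_char ab ac bc).
- by rewrite cyc_c // eq_sym.
- by rewrite cyc_a // eq_sym.
- by rewrite cyc_b // eq_sym.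
by move=> x xa xb xc; rewrite cyc_o // eq_sym.
Qed.

Lemma cyc_inv (T : finType) (a b c : T) : a != b -> a != c -> b != c -> (cyc a b c)^-1 = cyc a c b.
Proof. move=> ab ac bc.
have f1 : cyc a b c a = b by apply: cyc_a.
have f2 : cyc a b c b = c by apply: cyc_b.
have f3 : cyc a b c c = a by apply: cyc_c.
have ca : c != a by rewrite eq_sym.
have cb : c != b by rewrite eq_sym.
apply: (cyc_char ac ab cb).
- by move: (permK (cyc a b c) c); rewrite f3.
- by move: (permK (cyc a b c) b); rewrite f2.
- by move: (permK (cyc a b c) a); rewrite f1.
by move=> x xa xc xb; move: (permK (cyc a b c) x); rewrite (cyc_o xa xb xc).
Qed.


Lemma cycA (T : finType) (a b c : T) : a != b -> a != c -> b != c -> cyc a b c a = b.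
Proof. by move=> *; apply: cyc_a. Qed.
Lemma cycB (T : finType) (a b c : T) : a != b -> a != c -> b != c -> cyc a b c b = c.
Proof. by move=> *; apply: cyc_b. Qed.
Lemma cycC (T : finType) (a b c : T) : a != b -> a != c -> b != c -> cyc a b c c = a.
Proof. by move=> *; apply: cyc_c. Qed.

End Part4.

Section Part5.

Section Orbit.
Variables (k : nat) (A : {set pos k}) (p0 : pos k).
Hypothesis hA0 : forall q, q \in A <-> exists g, combination g /\ act_pos g p0 = q.

Lemma inA_act q g : q \in A -> combination g -> act_pos g q \in A.
Proof.
case/hA0 => g0 [c0 e0] cg; apply/hA0; exists (g0 ++ g); split; first exact: comb_cat.
by rewrite act_pos_cat e0.
Qed.

Lemma inA_actV q g : combination g -> act_pos g q \in A -> q \in A.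
Proof. by move=> cg H; rewrite -(invseqK_pos q cg); apply: inA_act => //; exact: comb_inv. Qed.

Lemma inA_path P Q : P \in A -> Q \in A -> exists w, combination w /\ act_pos w P = Q.
Proof.
case/hA0 => g1 [c1 e1]; case/hA0 => g2 [c2 e2].
exists (invseq g1 ++ g2); split; first by apply: comb_cat => //; exact: comb_inv.
by rewrite act_pos_cat -e1 invseqK_pos.
Qed.

Section Core.
Variables (gm Xi l : move k) (P : pos k).
Hypotheses (PA : P \in A) (vg : valid_move gm) (vX : valid_move Xi) (vl : valid_move l)
  (HZ : forall p, in_layer gm p -> in_layer l (move_pos Xi p) -> p = P)
  (sgP : in_layer gm P) (shP : in_layer l (move_pos Xi P))
  (gP : move_pos gm P != P) (lP : move_pos l (move_pos Xi P) != move_pos Xi P).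

Local Notation m := (inv_move gm).
Local Notation X := (inv_move Xi).
Local Notation li := (inv_move l).
Local Notation hseq := [:: Xi; l; X].
Local Notation hiseq := [:: Xi; li; X].
Local Notation kseq := (gm :: hseq ++ m :: hiseq).

Lemma core :
  let u := act_pos hiseq P in let w := move_pos m P in
  [/\ u \in A, w \in A, u != P, w != P & u != w] /\ Hr A (cyc P u w).
Proof.
move=> u w.
have vm : valid_move m by rewrite valid_inv.
have vXX : valid_move X by rewrite valid_inv.
have vli : valid_move li by rewrite valid_inv.
pose g := move_pos gm; pose gi := move_pos m; pose h := act_pos hseq; pose hi := act_pos hiseq.
pose Sg := in_layer gm; pose Sh := fun p => in_layer l (move_pos Xi p).
have gout p : ~~ Sg p -> g p = p by move=> H; rewrite /g move_pos_out.
have gin p : Sg p -> Sg (g p) by rewrite /Sg /g in_layer_move.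
have gK p : gi (g p) = p by rewrite /gi /g move_posK.
have gKV p : g (gi p) = p by rewrite /gi /g move_posKV.
have hE p : h p = move_pos X (move_pos l (move_pos Xi p)) by [].
have hiE p : hi p = move_pos X (move_pos li (move_pos Xi p)) by [].
have hout p : ~~ Sh p -> h p = p by move=> H; rewrite hE (@move_pos_out _ l) // move_posK.
have hin p : Sh p -> Sh (h p) by rewrite /Sh hE move_posKV // in_layer_move.
have hK p : hi (h p) = p by rewrite hiE hE move_posKV // move_posK // move_posK.
have hKV p : h (hi p) = p.
  by rewrite hiE hE move_posKV // -{1}(inv_moveK l) move_posKV ?valid_inv // move_posK.
have hP : h P != P.
  apply: contra lP => /eqP e; apply/eqP.
  by rewrite -{2}e hE move_posKV.
have HZ' y : Sg y -> Sh y -> y = P by exact: HZ.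
have [v1 v2 v3 [d1 d2 d3]] := comm_vals gout gin gK gKV hout hin hK hKV HZ' sgP shP gP hP.
have kE p : act_pos kseq p = hi (gi (h (g p))) by [].
have uA : u \in A by apply: inA_act => //; rewrite /combination /= vX vli vXX.
have wA : w \in A by apply: (@inA_act _ [:: m]) => //=; rewrite vm.
have cseq : combination kseq by rewrite /combination /= vg vX vl vXX vm vli.
split; first by split=> //; rewrite eq_sym.
split; first by apply: perm_on_cyc => //; rewrite eq_sym.
exists kseq; split => //.
  move=> p pA; rewrite kE.
  case: (eqVneq p P) => [->|pP]; first by rewrite v1 cyc_a // eq_sym.
  case: (eqVneq p u) => [->|pu]; first by rewrite v2 cyc_b // eq_sym.
  case: (eqVneq p w) => [->|pw]; first by rewrite v3 cyc_c // eq_sym.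
  rewrite cyc_o //; apply: (comm_fix gout gin gK hout hin hK (Z := pred1 P)) => //.
  - by move=> y s1 s2; rewrite /= (HZ' _ s1 s2).
  - by apply: contra pw => /eqP e; rewrite -(gK p) e.
  - by apply: contra pu => /eqP e; rewrite -(hK p) e.
move=> y yA.
pose gX := move_X gm; pose giX := move_X m; pose hX := act_X hseq; pose hiX := act_X hiseq.
pose SgX := fun y : pos k * 'I_3 => Sg y.1; pose ShX := fun y : pos k * 'I_3 => Sh y.1.
have goutX z : ~~ SgX z -> gX z = z by move=> H; rewrite /gX move_X_out.
have ginX z : SgX z -> SgX (gX z) by rewrite /SgX /gX move_X_fst /Sg in_layer_move.
have gKX z : giX (gX z) = z by rewrite /giX /gX move_XK.
have hEX z : hX z = move_X X (move_X l (move_X Xi z)) by [].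
have hiEX z : hiX z = move_X X (move_X li (move_X Xi z)) by [].
have houtX z : ~~ ShX z -> hX z = z.
  by move=> H; rewrite hEX (@move_X_out _ l) ?move_X_fst // move_XK.
have hinX z : ShX z -> ShX (hX z).
  by rewrite /ShX /Sh hEX !move_X_fst move_posKV // in_layer_move.
have hKX z : hiX (hX z) = z by rewrite hiEX hEX move_XKV // move_XK // move_XK.
have kEX : act_X kseq y = hiX (giX (hX (gX y))) by [].
rewrite kEX; apply: (comm_fix goutX ginX gKX houtX hinX hKX (Z := fun z => z.1 == P)).
- by move=> z s1 s2; rewrite /= (HZ' _ s1 s2).
- by apply: contra yA => /eqP ->.
- apply: contra yA => /eqP e; apply: (@inA_actV _ [:: gm]); first by rewrite /combination /= vg.
  by move: e; rewrite /gX move_X_fst /= => ->.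
- apply: contra yA => /eqP e; apply: (@inA_actV _ hseq); first by rewrite /combination /= vX vl vXX.
  by move: e; rewrite /hX act_X_fst => ->.
Qed.
End Core.
End Orbit.

End Part5.

Section Part6.

Definition midb k (x : 'I_k) := x == rev_ord x.
Definition nmid2 k (P : pos k) := forall a b : 'I_3, a != b -> midb (P a) -> midb (P b) -> False.

Lemma psi_fixE k (i j : 'I_3) (q : pos k) : i != j -> psi i j q = q ->
  q i = rev_ord (q j) /\ q j = q i.
Proof.
move=> ij e; split.
  by rewrite -{1}e psi_i.
by rewrite -{1}e psi_j.
Qed.

Lemma pos_eq3 k (i j : 'I_3) (p q : pos k) : i != j ->
  p i = q i -> p j = q j -> p (third i j) = q (third i j) -> p = q.
Proof.
move=> ij e1 e2 e3; apply/ffunP => x.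
by case/or3P: (cover3 x ij) => /eqP ->.
Qed.

Section Geo.
Variables (k : nat) (A : {set pos k}) (p0 : pos k).
Hypothesis hA0 : forall q, q \in A <-> exists g, combination g /\ act_pos g p0 = q.
Hypothesis nm : forall P, P \in A -> nmid2 P.

Lemma geo P (m : move k) : P \in A -> valid_move m -> move_pos m P != P ->
  exists u, [/\ u \in A, u != P, u != move_pos m P & move_pos m P != P] /\
            Hr A (cyc P u (move_pos m P)).
Proof.
case: m => [[i j] c] PA; rewrite /valid_move /= => ij mP.
have ji : j != i by rewrite eq_sym.
set t := third i j.
have lay : P t == c.
  by apply: contraR mP => H; rewrite move_pos_out.
have it : i != t by rewrite eq_sym third_ni.
have jt : j != t by rewrite eq_sym third_nj.
have tj : t != j by rewrite eq_sym.
have ti : t != i by rewrite eq_sym.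
have nmP := nm PA.
pose gm : move k := ((j, i), c).
have vg : valid_move gm by [].
have sgP : in_layer gm P by rewrite /in_layer /= (eqP (thirdC ij)).
have sgE p : in_layer gm p = (p t == P t) by rewrite /in_layer /= (eqP (thirdC ij)) (eqP lay).
have gP : move_pos gm P != P.
  apply: contra mP => /eqP e.
  by rewrite -{1}e (move_posK P (vg : valid_move gm)).
have fin : forall Xi l, valid_move Xi -> valid_move l ->
  (forall p, in_layer gm p -> in_layer l (move_pos Xi p) -> p = P) ->
  in_layer l (move_pos Xi P) -> move_pos l (move_pos Xi P) != move_pos Xi P ->
  exists u, [/\ u \in A, u != P, u != move_pos ((i, j), c) P & move_pos ((i, j), c) P != P] /\
            Hr A (cyc P u (move_pos ((i, j), c) P)).
  move=> Xi l vX vl HZ shP lP.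
  have [[uA wA uP wP uw] H] := core hA0 PA vg vX vl HZ sgP shP gP lP.
  by eexists; split; [split; [exact uA|exact uP|exact uw|exact wP] | exact H].
case: (boolP (P j == P t)) => [/eqP Pjt | Pjt].
-
  pose Xi : move k := ((t, j), P i); pose l : move k := ((i, j), rev_ord (P j)).
  have XiE p : move_pos Xi p = if p i == P i then psi t j p else p.
    by rewrite /move_pos /in_layer /= (eqP (third_tj ij)).
  have lE q : in_layer l q = (q t == rev_ord (P j)) by [].
  apply: (fin Xi l) => //.
  + move=> p; rewrite sgE lE XiE; case: ifP => [/eqP pi /eqP pt /eqP pq | _ /eqP pt1 /eqP pt2].
      rewrite psi_i in pq; apply: (pos_eq3 ij) => //; exact: rev_ord_inj.
    have mj : P j = rev_ord (P j) by rewrite {1}Pjt -pt1 pt2.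
    exfalso; apply: (nmP j t) => //; rewrite /midb -?Pjt; exact/eqP.
  + by rewrite lE XiE eqxx psi_i.
  + rewrite XiE eqxx; apply/negP => /eqP e.
    have lay' : in_layer l (psi t j P) by rewrite lE psi_i.
    move: e; rewrite /move_pos lay' => /(psi_fixE ij) [e1 e2].
    have qi : (psi t j P) i = P i by rewrite psi_o.
    have qj : (psi t j P) j = P t by rewrite psi_j.
    rewrite qi qj in e1 e2.
    have mi : P i = rev_ord (P i) by rewrite {1}e1 e2.
    have mt : P t = rev_ord (P t) by rewrite {1}e2 e1.
    by apply: (nmP i t) => //; apply/eqP.
-
  pose Xi : move k := ((j, t), P i); pose l : move k := ((i, j), P j).
  have XiE p : move_pos Xi p = if p i == P i then psi j t p else p.
    by rewrite /move_pos /in_layer /= (eqP (third_ji ij)).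
  have lE q : in_layer l q = (q t == P j) by [].
  apply: (fin Xi l) => //.
  + move=> p; rewrite sgE lE XiE; case: ifP => [/eqP pi /eqP pt /eqP pq | _ /eqP pt1 /eqP pt2].
      rewrite psi_j // in pq; exact: (pos_eq3 ij).
    by move: Pjt; rewrite -pt2 pt1 eqxx.
  + by rewrite lE XiE eqxx psi_j.
  + rewrite XiE eqxx; apply/negP => /eqP e.
    have lay' : in_layer l (psi j t P) by rewrite lE psi_j.
    move: e; rewrite /move_pos lay' => /(psi_fixE ij) [e1 e2].
    have qi : (psi j t P) i = P i by rewrite psi_o.
    have qj : (psi j t P) j = rev_ord (P t) by rewrite psi_i.
    rewrite qi qj rev_ordK in e1 e2.
    have mi : P i = rev_ord (P i) by rewrite -{1}e2 e1.
    have mt : P t = rev_ord (P t) by rewrite e2 e1.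
    by apply: (nmP i t) => //; apply/eqP.
Qed.
End Geo.

End Part6.

Section Part7.
Local Open Scope group_scope.

Lemma perm_onS' (T : finType) (S1 S2 : {set T}) (s : {perm T}) :
  S1 \subset S2 -> perm_on S1 s -> perm_on S2 s.
Proof. by move=> sub p; apply: subset_trans sub. Qed.

Lemma supp_cyc (T : finType) (a b c x : T) : cyc a b c x != x -> [|| x == a, x == b | x == c].
Proof.
apply: contraR; rewrite !negb_or => /and3P [xa xb xc].
by rewrite cyc_o.
Qed.

Section Alt.
Variables (k : nat) (A : {set pos k}).

Definition Alt3 (S : {set pos k}) := forall a b c, a \in S -> b \in S -> c \in S ->
  a != b -> a != c -> b != c -> Hr A (cyc a b c).
Definition AltS (S : {set pos k}) := forall s, perm_on S s -> ~~ odd_perm s -> Hr A s.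

Lemma P1 S : Alt3 S -> AltS S.
Proof.
move=> H3 s; move: {2}#|[set x | s x != x]|.+1 (ltnSn #|[set x | s x != x]|) => n.
elim: n s => // n IH s lt ps ev.
have step : forall a b c x, a \in S -> b \in S -> c \in S -> a != b -> a != c -> b != c ->
    s a != a -> s b != b -> s c != c -> s x != x -> (s * cyc a b c) x = x -> Hr A s.
  move=> a b c x aS bS cS ab ac bc sa sb sc sx e.
  have ρH := H3 _ _ _ aS bS cS ab ac bc.
  have sub : [set y | (s * cyc a b c) y != y] \proper [set y | s y != y].
    apply/properP; split; last by exists x; rewrite !inE ?e ?eqxx.
    apply/subsetP => y; rewrite !inE; apply: contraNN => /eqP sy.
    rewrite permM sy; apply/eqP; apply: cyc_o.
    - by apply/eqP => ya; move: sa; rewrite -ya sy eqxx.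
    - by apply/eqP => ya; move: sb; rewrite -ya sy eqxx.
    - by apply/eqP => ya; move: sc; rewrite -ya sy eqxx.
  have Hτ : Hr A (s * cyc a b c).
    apply: IH.
    - by apply: leq_trans (proper_card sub) _.
    - by apply: perm_onM => //; apply: perm_on_cyc.
    - by rewrite odd_permM odd_cyc // addbF.
  by rewrite -(mulgK (cyc a b c) s); apply: HrM => //; apply: HrV.
case: (pickP (fun x => s x != x)) => [a sa | H]; last first.
  have -> : s = 1 by apply/permP => x; move: (H x) => /negbFE/eqP ->; rewrite perm1.
  exact: Hr1.
set b := s a.
have aS : a \in S by apply: (subsetP ps); rewrite inE.
have bS : b \in S by rewrite perm_closed.
have ab : a != b by rewrite eq_sym.
have sb : s b != b by apply: contra sa => /eqP e; apply/eqP; apply: (@perm_inj _ s).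
case: (eqVneq (s b) a) => [sba | sba].
- case: (pickP (fun x => [&& s x != x, x != a & x != b])) => [d /and3P [sd da db] | H]; last first.
    have st : s = tperm a b.
      apply/permP => x; case: (eqVneq x a) => [->|xa]; first by rewrite tpermL.
      case: (eqVneq x b) => [->|xb]; first by rewrite tpermR.
      by move: (H x); rewrite xa xb !andbT => /negbFE/eqP ->; rewrite tpermD // eq_sym.
    by move: ev; rewrite st odd_tperm ab.
  have dS : d \in S by apply: (subsetP ps); rewrite inE.
  have ba : b != a by rewrite eq_sym.
  have bd : b != d by rewrite eq_sym.
  have ad : a != d by rewrite eq_sym.
  have sb' : s b != b by rewrite sba.
  have := @step b a d a bS aS dS ba bd ad sb' sa sd sa; apply.
  by rewrite permM -/b (cycA ba bd ad).
- set c := s b.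
  have cS : c \in S by rewrite perm_closed.
  have cb : c != b := sb.
  have sc : s c != c by apply: contra sb => /eqP e; apply/eqP; apply: (@perm_inj _ s).
  have ac : a != c by rewrite eq_sym.
  have bc : c != b := sb.
  have := @step a c b a aS cS bS ac ab cb sa sc sb sa; apply.
  by rewrite permM -/b (cycC ac ab cb).
Qed.


Lemma Hr_inv3 a b c : a != b -> a != c -> b != c -> Hr A (cyc a b c) -> Hr A (cyc a c b).
Proof. by move=> ab ac bc H; have := HrV H; rewrite (cyc_inv ab ac bc). Qed.

Lemma two_in S x y z : AltS S -> Hr A (cyc x y z) -> x \notin S -> y \in S -> z \in S ->
  y != z -> Alt3 (x |: S).
Proof.
move=> HS d xS yS zS yz.
have key p q : p \in S -> q \in S -> p != q -> Hr A (cyc x p q).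
  move=> pS qS pq.
  have xp : x != p by apply: contraNneq xS => ->.
  have xq : x != q by apply: contraNneq xS => ->.
  pose z' := tperm y p z.
  pose s0 := tperm y p * tperm z' q.
  have z'p : z' != p.
    rewrite /z'; apply/negP => /eqP e.
    have : tperm y p z = tperm y p y by rewrite tpermL.
    by move/perm_inj => zy; move: yz; rewrite zy eqxx.
  have s0y : s0 y = p by rewrite permM tpermL tpermD // eq_sym.
  have s0z : s0 z = q by rewrite permM -/z' tpermL.
  have ps0 : perm_on S s0.
    have z'S : z' \in S by rewrite /z'; case: tpermP => *.
    apply: perm_onM; [apply: perm_onS' (tperm_on y p) | apply: perm_onS' (tperm_on z' q)];
      by apply/subsetP => w; rewrite !inE => /orP [] /eqP ->.
  have Hconj : forall s, perm_on S s -> ~~ odd_perm s -> Hr A (cyc x (s y) (s z)).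
    move=> s pS' ev; have := HrJ d (HS s pS' ev).
    by rewrite cyc_conj (out_perm pS' xS).
  case ev : (odd_perm s0).
  - have ps1 : perm_on S (s0 * tperm p q).
      apply: perm_onM => //; apply: perm_onS' (tperm_on p q);
        by apply/subsetP => w; rewrite !inE => /orP [] /eqP ->.
    have := Hconj _ ps1; rewrite odd_permM ev odd_tperm pq => /(_ isT).
    rewrite [(s0 * _) y]permM [(s0 * _) z]permM s0y s0z tpermL tpermR => H.
    have qp : q != p by rewrite eq_sym.
    by have := HrV H; rewrite (cyc_inv xq xp qp).
  - by have := Hconj _ ps0; rewrite ev s0y s0z => /(_ isT).
move=> a b c; rewrite !inE => aS bS cS ab ac bc.
have inS w : (w == x) || (w \in S) -> w != x -> w \in S.
  by case/orP => [/eqP ->|->]; rewrite ?eqxx.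
case: (eqVneq a x) => [ea|ax].
  move: ab ac bS cS; rewrite ea => ab ac bS cS.
  have bS' : b \in S by apply: inS => //; rewrite eq_sym.
  have cS' : c \in S by apply: inS => //; rewrite eq_sym.
  exact: key bS' cS' bc.
case: (eqVneq b x) => [eb|bx].
  move: ab bc aS cS; rewrite eb => ab bc aS cS.
  have aS' : a \in S by apply: inS.
  have cS' : c \in S by apply: inS => //; rewrite eq_sym.
  have ca : c != a by rewrite eq_sym.
  rewrite -(cyc_rot ab ac bc); exact: key cS' aS' ca.
case: (eqVneq c x) => [ec|cx].
  move: ac bc aS bS; rewrite ec => ac bc aS bS.
  have aS' : a \in S by apply: inS.
  have bS' : b \in S by apply: inS.
  have xa : x != a by rewrite eq_sym.
  have xb : x != b by rewrite eq_sym.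
  rewrite (cyc_rot xa xb ab); exact: key aS' bS' ab.
apply: HS; last by rewrite odd_cyc.
by apply: perm_on_cyc; apply: inS.
Qed.

Lemma one_in S x y z : AltS S -> Hr A (cyc x y z) -> x \notin S -> y \in S -> z \notin S ->
  x != z -> 2 < #|S| -> Alt3 (z |: S).
Proof.
move=> HS d xS yS zS xz c3.
have xy : x != y by apply: contraNneq xS => ->.
have yz : y != z by apply: contraTneq yS => ->.
have c2 : 1 < #|S :\ y| by move: c3; rewrite (cardsD1 y S) yS.
case/card_gt1P: c2 => a [b [aS' bS' ab]].
move: aS' bS'; rewrite !inE => /andP [ay aS] /andP [by' bS].
have ya : y != a by rewrite eq_sym.
have yb : y != b by rewrite eq_sym.
have ρH : Hr A (cyc y a b).
  by apply: HS; [apply: perm_on_cyc | rewrite odd_cyc].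
have := HrJ ρH d; rewrite cyc_conj (cycB xy xz yz).
have da : cyc x y z a = a.
  apply: cyc_o => //; [apply: contraTneq aS => ->; exact: xS | apply: contraTneq aS => ->; exact: zS].
have db : cyc x y z b = b.
  apply: cyc_o => //; [apply: contraTneq bS => ->; exact: xS | apply: contraTneq bS => ->; exact: zS].
rewrite da db => H.
have za : z != a by apply: contraNneq zS => ->.
have zb : z != b by apply: contraNneq zS => ->.
exact: (two_in HS H zS aS bS ab).
Qed.
End Alt.

End Part7.

Section Part8.

Definition extb k (x : 'I_k) := (val x == 0) || (val x == k.-1).
Definition fw k (Q : pos k) (r : 'I_3) := extb (Q r) && [forall x, (x != r) ==> midb (Q x)].
Definition frameb k (Q : pos k) := [exists r, fw Q r].

Section Mid.
Variables (k : nat) (hk : 2 <= k).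

Lemma val_rev (x : 'I_k) : val (rev_ord x) = k - (val x).+1.
Proof. by []. Qed.

Lemma midE (x : 'I_k) : midb x = ((val x).*2.+1 == k).
Proof.
rewrite /midb -val_eqE (_ : val (rev_ord x) = k - (val x).+1) //; case: x => v vk /=.
apply/eqP/eqP; lia.
Qed.

Lemma mid_next (x : 'I_k) : midb x -> ~~ extb x.
Proof.
rewrite midE /extb => /eqP e; apply/negP => /orP [] /eqP v; lia.
Qed.

Lemma mid_uniq (x y : 'I_k) : midb x -> midb y -> x = y.
Proof.
rewrite !midE => /eqP e1 /eqP e2; apply: val_inj; lia.
Qed.

Lemma mid_odd (x : 'I_k) : midb x -> odd k.
Proof.
rewrite midE => /eqP e; lia.
Qed.

Lemma mid_val (x : 'I_k) : midb x -> val x = k.-1./2.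
Proof.
rewrite midE => /eqP e; lia.
Qed.

Lemma val_mid (x : 'I_k) : odd k -> val x = k.-1./2 -> midb x.
Proof.
move=> ok e; rewrite midE; apply/eqP; lia.
Qed.

Lemma mid_rev (x : 'I_k) : midb (rev_ord x) = midb x.
Proof. by rewrite /midb rev_ordK eq_sym. Qed.

Lemma ext_rev (x : 'I_k) : extb (rev_ord x) = extb x.
Proof.
rewrite /extb (_ : val (rev_ord x) = k - (val x).+1) //; case: x => v vk /=.
apply/idP/idP => /orP [] /eqP e; apply/orP; lia.
Qed.

Lemma ext_two (x y : 'I_k) : extb x -> extb y -> y = x \/ y = rev_ord x.
Proof.
case: x => xv xk; case: y => yv yk; rewrite /extb /= => /orP [] /eqP ex /orP [] /eqP ey;
  [left|right|right|left]; apply: val_inj; rewrite ?val_rev /=; lia.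
Qed.

Lemma psi_coord (i j : 'I_3) (Q : pos k) x : i != j ->
  (psi i j Q) x = Q (tperm i j x) \/ (psi i j Q) x = rev_ord (Q (tperm i j x)).
Proof.
move=> ij; case: (eqVneq x i) => [->|xi]; first by right; rewrite psi_i tpermL.
case: (eqVneq x j) => [->|xj]; first by left; rewrite psi_j // tpermR.
by left; rewrite psi_o // tpermD // eq_sym.
Qed.

Lemma ext_psi (i j : 'I_3) (Q : pos k) x : i != j -> extb ((psi i j Q) x) = extb (Q (tperm i j x)).
Proof. by move=> ij; case: (psi_coord Q x ij) => ->; rewrite ?ext_rev. Qed.
Lemma mid_psi (i j : 'I_3) (Q : pos k) x : i != j -> midb ((psi i j Q) x) = midb (Q (tperm i j x)).
Proof. by move=> ij; case: (psi_coord Q x ij) => ->; rewrite ?mid_rev. Qed.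

Lemma frameb_move (m : move k) Q : valid_move m -> frameb Q -> frameb (move_pos m Q).
Proof.
case: m => [[i j] c]; rewrite /valid_move /move_pos /= => ij fQ; case: ifP => // _.
case/existsP: fQ => r /andP [er /forallP mr]; apply/existsP; exists (tperm i j r).
rewrite /fw ext_psi // tpermK er /=; apply/forallP => x; apply/implyP => xr.
rewrite mid_psi //; apply: (implyP (mr _)).
by apply: contra xr => /eqP <-; rewrite tpermK.
Qed.

Lemma frameb_act (w : seq (move k)) (Q : pos k) : combination w -> frameb Q -> frameb (act_pos w Q).
Proof.
elim: w Q => //= m w IH Q /andP [vm cw] fQ; apply: IH => //; exact: frameb_move.
Qed.

Lemma extP (Q : pos k) : external Q = [exists x, extb (Q x)].
Proof.
rewrite /external; apply/set0Pn/existsP => [[x Hx]|[x Hx]]; exists x; move: Hx; by rewrite inE.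
Qed.

Lemma ext_move (m : move k) Q : valid_move m -> external Q -> external (move_pos m Q).
Proof.
case: m => [[i j] c]; rewrite /valid_move /move_pos /= => ij; case: ifP => // _.
rewrite !extP => /existsP [x ex]; apply/existsP; exists (tperm i j x).
by rewrite ext_psi // tpermK.
Qed.

Lemma ext_act (w : seq (move k)) (Q : pos k) : combination w -> external Q -> external (act_pos w Q).
Proof.
elim: w Q => //= m w IH Q /andP [vm cw] fQ; apply: IH => //; exact: ext_move.
Qed.

Lemma frameE (Q : pos k) : odd k -> (Q \in frame k) = frameb Q.
Proof.
move=> ok; rewrite /frame inE; apply/andP/existsP => [[/cards1P [r Br] /forallP H]|[r /andP [er /forallP mr]]].
  exists r; rewrite /fw; have : r \in B Q by rewrite Br inE.
  rewrite inE => er; apply/andP; split; first exact: er.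
  apply/forallP => x; apply/implyP => xr.
  have : x \notin B Q by rewrite Br inE.
  by move/(implyP (H x)) => /eqP; apply: val_mid.
have BQ : B Q = [set r].
  apply/setP => x; rewrite !inE; case: (eqVneq x r) => [->|xr]; first exact: er.
  by apply/negbTE/mid_next; apply: (implyP (mr x)).
split; first by rewrite BQ cards1.
apply/forallP => x; apply/implyP; rewrite BQ inE => xr.
by rewrite (mid_val (implyP (mr x) xr)).
Qed.

Lemma fw_uniq (Q : pos k) (r r' : 'I_3) : fw Q r -> extb (Q r') -> r' = r.
Proof.
case/andP => _ /forallP H e; apply/eqP; apply: contraLR e => rr.
exact: mid_next (implyP (H r') rr).
Qed.

Lemma reach (P Q : pos k) (r r' : 'I_3) : fw P r -> fw Q r' -> r != r' ->
  exists m : move k, valid_move m /\ move_pos m P = Q.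
Proof.
case/andP => eP /forallP mP; case/andP => eQ /forallP mQ rr.
have r'r : r' != r by rewrite eq_sym.
set a := third r r'.
have ar : a != r by apply: third_ni.
have ar' : a != r' by apply: third_nj.
have mPa := implyP (mP a) ar.
have mPr' := implyP (mP r') r'r.
have mQa := implyP (mQ a) ar'.
have mQr := implyP (mQ r) rr.
case: (ext_two eP eQ) => e.
- exists ((r, r'), P a); split => //.
  rewrite /move_pos /in_layer /= eqxx; apply: (pos_eq3 rr).
  + by rewrite psi_i; apply: mid_uniq => //; rewrite mid_rev.
  + by rewrite psi_j.
  + by rewrite psi_t //; apply: mid_uniq.
- exists ((r', r), P a); split => //.
  rewrite /move_pos /in_layer /= (eqP (thirdC rr)) eqxx; apply: (pos_eq3 rr).
  + by rewrite psi_j //; apply: mid_uniq.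
  + by rewrite psi_i.
  + by rewrite psi_o //; apply: mid_uniq.
Qed.
End Mid.

End Part8.

Section Part9.
Local Open Scope group_scope.

Section Main.
Variables (k : nat) (hk : 2 <= k) (A : {set pos k}) (p0 : pos k).
Hypothesis hext : external p0.
Hypothesis hA0 : forall q, q \in A <-> exists g, combination g /\ act_pos g p0 = q.

Lemma cross (S : {set pos k}) (w : seq (move k)) P : combination w -> P \in S ->
  act_pos w P \notin S -> exists P' (m : move k), [/\ P' \in S, valid_move m & move_pos m P' \notin S].
Proof.
elim: w P => [|m w IH] P /=; first by move=> _ ->.
case/andP => vm cw PS H.
case: (boolP (move_pos m P \in S)) => [mS|mS]; first exact: IH mS H.
by exists P, m.
Qed.

Lemma frame_eqA P a b : P \in A -> a != b -> midb (P a) -> midb (P b) -> A = frame k.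
Proof.
move=> PA ab ma mb.
have ok := mid_odd hk ma.
have Pext : external P.
  by case/hA0: PA => g [cg <-]; apply: ext_act.
set r := third a b.
have fwP : fw P r.
  move: Pext; rewrite extP => /existsP [x ex].
  have xa : x != a by apply: contraTneq ex => ->; exact: mid_next.
  have xb : x != b by apply: contraTneq ex => ->; exact: mid_next.
  have xr : x = r by case/or3P: (cover3 x ab) => /eqP e //; [move: xa|move: xb]; rewrite e eqxx.
  apply/andP; split; first by rewrite -xr.
  apply/forallP => y; apply/implyP => yr.
  by case/or3P: (cover3 y ab) => /eqP e //; [rewrite e|rewrite e|move: yr; rewrite e eqxx].
apply/setP => Q; rewrite frameE //; apply/idP/idP.
  move=> QA; have [w [cw <-]] := inA_path hA0 PA QA.
  by apply: frameb_act => //; apply/existsP; exists r.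
case/existsP => r' fwQ.
have fromR R s : R \in A -> fw R s -> s != r' -> Q \in A.
  move=> RA fR sr; have [m [vm e]] := reach hk fR fwQ sr.
  by rewrite -e; apply: (@inA_act _ _ _ hA0 _ [:: m]) => //=; rewrite vm.
case: (eqVneq r r') => [rr|rr]; last exact: fromR PA fwP rr.
have [b' br] : exists b' : 'I_3, b' != r.
  case: (eqVneq r ord0) => [->|h]; last by exists ord0; rewrite eq_sym.
  by exists (inord 1); rewrite -val_eqE /= inordK.
pose m : move k := ((b', r), P (third b' r)).
have vm : valid_move m by [].
have RA : move_pos m P \in A by apply: (@inA_act _ _ _ hA0 _ [:: m]) => //=; rewrite vm.
have fR : frameb (move_pos m P) by apply: frameb_move => //; apply/existsP; exists r.
case/existsP: fR => s fs.
have eb : extb ((move_pos m P) b').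
  rewrite /move_pos /in_layer /= eqxx psi_i ext_rev //; by case/andP: fwP.
have sb := fw_uniq hk fs eb.
by apply: (fromR _ _ RA fs); rewrite -sb -rr.
Qed.

Hypothesis nm : forall P, P \in A -> nmid2 P.

Lemma grow n (S : {set pos k}) : #|A :\: S| <= n -> S \subset A -> 2 < #|S| -> AltS A S -> AltS A A.
Proof.
elim: n S => [|n IH] S le sub c3 HS.
  have AS : A \subset S by rewrite -setD_eq0 -cards_eq0 -leqn0.
  by move=> s ps ev; apply: HS => //; apply: perm_onS' ps.
case: (boolP (A \subset S)) => [AS|nAS].
  by move=> s ps ev; apply: HS => //; apply: perm_onS' ps.
case/subsetPn: nAS => Q QA QS.
case/card_gt0P: (ltnW (ltnW c3)) => P PS.
have PA : P \in A by apply: (subsetP sub).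
have [w [cw e]] := inA_path hA0 PA QA.
have [P' [m [P'S vm mS]]] : exists P' (m : move k), [/\ P' \in S, valid_move m & move_pos m P' \notin S].
  by apply: (cross cw PS); rewrite e.
have P'A : P' \in A by apply: (subsetP sub).
have mP : move_pos m P' != P' by apply: contraNneq mS => ->.
have [u [[uA uP uw wP] Hd]] := geo hA0 nm P'A vm mP.
set x := move_pos m P' in mS uw wP Hd mP.
have d' : Hr A (cyc x P' u).
  have xu : x != u by rewrite eq_sym.
  have pu : P' != u by rewrite eq_sym.
  by rewrite -(cyc_rot mP xu pu).
have ext : forall y, y \in A -> y \notin S -> Alt3 A (y |: S) -> AltS A A.
  move=> y yA yS H3; apply: (IH (y |: S)).
  - rewrite -ltnS; apply: leq_trans le; apply: proper_card; apply/properP; split.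
      by apply/subsetP => q; rewrite !inE => /andP [/norP [_ ->] ->].
    by exists y; rewrite !inE ?eqxx ?yA ?yS.
  - by rewrite subUset sub1set yA sub.
  - by rewrite cardsU1 yS; apply: leq_trans c3 _; rewrite leq_addl.
  - exact: P1.
case: (boolP (u \in S)) => [uS|uS].
  apply: (ext x) => //; first by apply: (@inA_act _ _ _ hA0 _ [:: m]) => //=; rewrite vm.
  by apply: (two_in HS d') => //; rewrite eq_sym.
apply: (ext u) => //.
apply: (one_in HS d') => //.
by rewrite eq_sym.
Qed.

Lemma alt3_base a b c : a != b -> a != c -> b != c -> Hr A (cyc a b c) -> Alt3 A [set a; b; c].
Proof.
move=> ab ac bc H.
have ba : b != a by rewrite eq_sym.
have ca : c != a by rewrite eq_sym.
have cb : c != b by rewrite eq_sym.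
have H1 := H.
have H2 : Hr A (cyc b c a) by rewrite (cyc_rot ab ac bc).
have H3 : Hr A (cyc c a b) by rewrite (cyc_rot bc ba ca).
have H4 : Hr A (cyc a c b) by apply: Hr_inv3.
have H5 : Hr A (cyc c b a) by rewrite (cyc_rot ac ab cb).
have H6 : Hr A (cyc b a c) by rewrite (cyc_rot cb ca ba).
rewrite /Alt3 => x y z; rewrite !inE -!orbA => /or3P [] /eqP -> /or3P [] /eqP -> /or3P [] /eqP -> xy xz yz.
all: first [ exact H1 | exact H2 | exact H3 | exact H4 | exact H5 | exact H6
           | by rewrite eqxx in xy | by rewrite eqxx in xz | by rewrite eqxx in yz ].
Qed.

Lemma AltA : AltS A A.
Proof.
have p0A : p0 \in A by apply/hA0; exists [::].
case: (boolP (A \subset [set p0])) => [sub|nsub].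
  move=> s ps _; have -> : s = 1.
    by apply: (perm_on_id ps); apply: leq_trans (subset_leq_card sub) _; rewrite cards1.
  exact: Hr1.
case/subsetPn: nsub => Q QA QS.
have [w [cw e]] := inA_path hA0 p0A QA.
have [P' [m [P'S vm mS]]] : exists P' (m : move k), [/\ P' \in [set p0], valid_move m & move_pos m P' \notin [set p0]].
  by apply: (cross cw (set11 p0)); rewrite e.
move: P'S mS; rewrite inE => /eqP -> mS.
have mP : move_pos m p0 != p0 by apply: contraNneq mS => ->; exact: set11.
have [u [[uA uP uw wP] Hd]] := geo hA0 nm p0A vm mP.
have pu : p0 != u by rewrite eq_sym.
have pw : p0 != move_pos m p0 by rewrite eq_sym.
have c3 : 2 < #|[set p0; u; move_pos m p0]|.
  apply/card_gt2P; exists p0, u, (move_pos m p0); split; first by rewrite !inE !eqxx ?orbT.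
  by split => //; rewrite eq_sym.
apply: (@grow #|A| [set p0; u; move_pos m p0]).
- exact: leq_trans (subset_leq_card (subsetDl _ _)) _.
- have wA : move_pos m p0 \in A by apply: (@inA_act _ _ _ hA0 _ [:: m]) => //=; rewrite vm.
  by apply/subsetP => q; rewrite !inE -!orbA => /or3P [] /eqP ->.
- exact: c3.
- exact: P1 (alt3_base pu pw uw Hd).
Qed.
End Main.

End Part9.

Theorem mainTheorem5 (k : nat) (hk : 2 <= k) (A : {set pos k})
  (hA : conn_class A) (hframe : odd k -> A != frame k)
  (pi : {perm pos k}) (hpi : perm_on A pi) (heven : ~~ odd_perm pi) :
  exists g : seq (move k), combination g /\
    (forall p, p \in A -> act_pos g p = pi p) /\
    (forall q (l : 'I_3), external q -> q \notin A -> l \in B q ->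
       act_X g (q, l) = (q, l)).
Proof.
case: hA => p0 [hext hA0].
have nm : forall P, P \in A -> nmid2 P.
  move=> P PA a b ab ma mb; have ok := mid_odd hk ma.
  by move/eqP: (hframe ok); apply; apply: (frame_eqA hk hext hA0 PA ab ma mb).
have [_ [g [cg e f]]] : Hr A pi := AltA hA0 nm hpi heven.
exists g; split => //; split => //.
by move=> q l _ qA _; apply: f.
Qed.
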